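(* In the deterministic $\mathsf{CD}$ model, deterministic $\mathsf{SR}$-communication with messages in $\{1,\ldots,M\}$ can be solved in $O(\min\{M,N\})$ time using $O(\min\{\log M,\log N\})$ energy.
   Context: Radio network: connected undirected graph; synchronized slots; each vertex transmits, listens or idles per slot, transmit/listen costing one unit of energy (energy = maximum per-vertex number of such slots). $\mathsf{CD}$: a listener receives the message if exactly one neighbor transmits, hears silence if none, and noise (distinguishable from silence) if at least two. Deterministic setting: vertices have distinct IDs in $\{1,\ldots,N\}$. $N^+(v)=N(v)\cup\{v\}$. Deterministic $\mathsf{SR}$-communication: given two (not necessarily disjoint) vertex sets $S$ and $R$, each $u\in S$ has a message $m_u\in\{1,\ldots,M\}$, and the goal is that every $v\in R$ with $N^+(v)\cap S\neq\emptyset$ learns $m_u$ for some $u\in N^+(v)\cap S$. *)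

(* Defs.v *)
From mathcomp Require Import all_boot.
Set Implicit Arguments. Unset Strict Implicit. Unset Printing Implicit Defensive.

Inductive action := Transmit of nat | Listen | Idle.

(* What a vertex observes in one slot: [NoFb] when it did not listen;
   a listener hears [Silence] (no transmitting neighbour), [Recv x]
   (exactly one transmitting neighbour, sending x) or [Noise] (>= 2). *)
Inductive feedback := NoFb | Silence | Noise | Recv of nat.

(* A deterministic protocol (for fixed, globally known N and M).
   A vertex's local knowledge: its ID, its S-input ([Some m_u] if u \in S,
   [None] otherwise), whether it is in R, and its history of feedbacks.
   [rounds] is the number of slots (the time complexity). *)
Record protocol := Protocol {
  rounds : nat;
  act : nat -> option nat -> bool -> seq feedback -> action;
  output : nat -> option nat -> bool -> seq feedback -> nat
}.

Definition is_active (a : action) : bool :=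
  if a is Idle then false else true.

Section Execution.
Variables (P : protocol) (V : finType) (adj : rel V) (id : V -> nat)
          (S R : {set V}) (m : V -> nat).

Definition sinput (v : V) : option nat := if v \in S then Some (m v) else None.

Definition action_of (h : V -> seq feedback) (v : V) : action :=
  act P (id v) (sinput v) (v \in R) (h v).

Definition tx_packet (a : action) : option nat :=
  if a is Transmit x then Some x else None.

Definition slot_feedback (h : V -> seq feedback) (v : V) : feedback :=
  match action_of h v with
  | Listen =>
      match [seq tx_packet (action_of h u) | u <- enum V &
               adj v u && (tx_packet (action_of h u) != None)] with
      | [::] => Silence
      | [:: Some x] => Recv x
      | [:: None] => Silence (* impossible *)
      | _ => Noise
      end
  | _ => NoFb
  end.

Fixpoint hist (t : nat) : V -> seq feedback :=
  match t with
  | 0 => fun _ => [::]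
  | t'.+1 => let h := hist t' in fun v => rcons (h v) (slot_feedback h v)
  end.

Definition energy (v : V) : nat :=
  \sum_(t < rounds P) is_active (action_of (hist t) v).

Definition final_output (v : V) : nat :=
  output P (id v) (sinput v) (v \in R) (hist (rounds P) v).

Definition closed_nbhd (v : V) : {set V} := [set u | (u == v) || adj v u].

Definition SR_solved : Prop :=
  forall v, v \in R -> (exists u, u \in closed_nbhd v :&: S) ->
    exists2 u, u \in closed_nbhd v :&: S & final_output v = m u.

End Execution.

Definition valid_instance (N M : nat) (V : finType) (adj : rel V) (id : V -> nat)
  (S : {set V}) (m : V -> nat) : Prop :=
  [/\ symmetric adj, irreflexive adj, (forall u v, connect adj u v)
    & [/\ injective id, (forall v, 1 <= id v <= N)
         & (forall u, u \in S -> 1 <= m u <= M)]].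

(* Main.v *)
Require Import Defs.
From mathcomp Require Import all_boot zify.
Set Implicit Arguments. Unset Strict Implicit. Unset Printing Implicit Defensive.

Definition Lv N M := up_log 2 (minn M N).
Definition keyf N M (i x : nat) := if M <= N then x.-1 else i.-1.
Definition sendc L t k := has (fun j => t == (2^L + k) %/ 2^j) (iota 0 L.+1).
Definition is_sil (f : feedback) := if f is Silence then true else false.
Fixpoint node d (h : seq feedback) : nat :=
  match d with
  | 0 => 1
  | d'.+1 => let n := node d' h in
             if is_sil (nth NoFb h (2 * n)) then (2 * n).+1 else 2 * n
  end.
Definition recvc L t h := has (fun d => t %/ 2 == node d h) (iota 0 L).
Definition theP N M := let L := Lv N M in
  Protocol (2 ^ L.+1)
   (fun i so inR h => match so with
      | Some x => if sendc L (size h) (keyf N M i x) then Transmit x else Idle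
      | None => if inR && recvc L (size h) h then Listen else Idle end)
   (fun i so inR h => match so with
      | Some x => x
      | None => if M <= N then node L h - 2^L + 1
                else match nth NoFb h (node L h) with Recv x => x | _ => 0 end
      end).

Lemma has_iota_sum (p : pred nat) L : (has p (iota 0 L) : nat) <= \sum_(d < L) p d.
Proof.
elim: L => [|L IH]; first by rewrite big_ord0.
have -> : iota 0 L.+1 = iota 0 L ++ [:: L] by rewrite -addn1 iotaD.
rewrite big_ord_recr /= has_cat /= orbF.
case: (has p (iota 0 L)) IH => /=; case: (p L) => /=; lia.
Qed.

Lemma sum_eq1 R a : \sum_(t < R) (t == a :> nat) <= 1.
Proof.
have : \sum_(t < R) (t == a :> nat) = (a < R).
  elim: R => [|R IH]; first by rewrite big_ord0.
  rewrite big_ord_recr /= IH; case: eqP; lia.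
by move=> ->; case: (a < R).
Qed.

Lemma sum_half R c : \sum_(t < R) (t %/ 2 == c) <= 2.
Proof.
apply: (@leq_trans (\sum_(t < R) ((t == 2*c :> nat) + (t == 2*c+1 :> nat)))).
  apply: leq_sum => t _; case: eqP => // H; case: eqP; case: eqP => //; lia.
rewrite big_split /=.
by rewrite -[2]/(1+1); apply: leq_add; apply: sum_eq1.
Qed.

Lemma node_range d h : 2^d <= node d h < 2^d.+1.
Proof.
elim: d => [|d IH] /=; first by [].
move: IH; rewrite !expnS; case: ifP => _; lia.
Qed.

Lemma node_ext d h1 h2 : (forall s, s < 2^d.+1 -> nth NoFb h1 s = nth NoFb h2 s) ->
  node d h1 = node d h2.
Proof.
elim: d => [|d IH] //= E.
have E' : forall s, s < 2^d.+1 -> nth NoFb h1 s = nth NoFb h2 s.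
  move=> s hs; apply: E; rewrite expnS; lia.
rewrite IH // E //; have := node_range d h2; rewrite !expnS; lia.
Qed.

Lemma lvl_uniq a b x : 2^a <= x < 2^a.+1 -> 2^b <= x < 2^b.+1 -> a = b.
Proof.
move=> /andP[h1 h2] /andP[h3 h4].
case: (ltngtP a b) => // H.
- have : 2^a.+1 <= 2^b by rewrite leq_exp2l.
  lia.
- have : 2^b.+1 <= 2^a by rewrite leq_exp2l.
  lia.
Qed.

Lemma div_range L k j : k < 2^L -> j <= L ->
  2^(L-j) <= (2^L + k) %/ 2^j < 2^(L-j).+1.
Proof.
move=> hk hj; have p0 : 0 < 2^j by rewrite expn_gt0.
rewrite leq_divRL // ltn_divLR // -!expnD.
have -> : L - j + j = L by lia.
have -> : (L - j).+1 + j = L.+1 by lia.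
rewrite expnS; lia.
Qed.

Lemma sendc_iff L k e t : k < 2^L -> e <= L -> 2^e <= t < 2^e.+1 ->
  sendc L t k = (t == (2^L + k) %/ 2^(L-e)).
Proof.
move=> hk he ht; apply/hasP/eqP.
- case=> j; rewrite mem_iota add0n => /andP[_ hj] /eqP Ht.
  have hj' : j <= L by lia.
  have := div_range hk hj'; rewrite -Ht => /(lvl_uniq ht) ->.
  by have -> : L - (L - j) = j by lia.
- move=> ->; exists (L - e); first by rewrite mem_iota; lia.
  by [].
Qed.

Lemma ar1 y n : y <= 2 * n -> n = y %/ 2 -> 2 * n = y.
Proof. lia. Qed.
Lemma ar2 y n : y != 2 * n -> n = y %/ 2 -> (2 * n).+1 = y.
Proof. lia. Qed.
Lemma ar3 a b K : 0 < a -> 0 < b -> K = a.-1 -> b.-1 = K -> a = b.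
Proof. lia. Qed.

Section Exec.
Variables (N M : nat) (V : finType) (adj : rel V) (id : V -> nat) (S R : {set V}) (m : V -> nat).
Local Notation P := (theP N M).
Local Notation L := (Lv N M).
Local Notation H := (hist P adj id S R m).
Local Notation actv := (action_of P id S R m).
Definition F t v := slot_feedback P adj id S R m (H t) v.

Lemma hist_mk t v : H t v = mkseq (fun s => F s v) t.
Proof. elim: t => [|t IH] //=; by rewrite IH mkseqS. Qed.

Lemma size_hist t v : size (H t v) = t.
Proof. by rewrite hist_mk size_mkseq. Qed.

Definition keyu u := keyf N M (id u) (m u).
Definition trans t u := (u \in S) && sendc L t (keyu u).

Lemma tx_eq t u : tx_packet (actv (H t) u) = if trans t u then Some (m u) else None.
Proof.
rewrite /action_of /sinput /trans /= size_hist.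
case: (u \in S) => /=; first by case: sendc.
by case: (_ && _).
Qed.

Definition nodeF d v := node d (mkseq (fun s => F s v) (2^d.+1)).

Lemma node_mk d t v : 2^d.+1 <= t -> node d (mkseq (fun s => F s v) t) = nodeF d v.
Proof.
move=> ht; apply: node_ext => s hs; rewrite !nth_mkseq //; lia.
Qed.

Lemma node_hist d t v : 2^d.+1 <= t -> node d (H t v) = nodeF d v.
Proof. by rewrite hist_mk; apply: node_mk. Qed.

Lemma listen_iff t v : v \notin S -> v \in R ->
  actv (H t) v = if has (fun d => t %/ 2 == nodeF d v) (iota 0 L) then Listen else Idle.
Proof.
move=> vS vR; rewrite /action_of /sinput (negbTE vS) vR /= size_hist /recvc.
congr (if _ then _ else _); apply: eq_has => d /=.
apply/eqP/eqP => E.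
- have := node_range d (H t v); rewrite -E expnS => hr.
  by rewrite E node_hist // expnS; lia.
- have := node_range d (mkseq (fun s => F s v) (2^d.+1)).
  rewrite -/(nodeF d v) -E expnS => hr.
  by rewrite E node_hist // expnS; lia.
Qed.

Lemma F_sil t v : actv (H t) v = Listen ->
  is_sil (F t v) = ~~ [exists u, adj v u && trans t u].
Proof.
move=> A; rewrite /F /slot_feedback A.
rewrite (eq_filter (a2 := fun u => adj v u && trans t u)); last first.
  by move=> u /=; rewrite tx_eq; case: trans; rewrite ?andbT ?andbF.
set X := filter _ (enum V).
have -> : map (fun u => tx_packet (actv (H t) u)) X = map (fun u => Some (m u)) X.
  by apply/eq_in_map => u; rewrite /X mem_filter => /andP[/andP[_ Tu] _]; rewrite tx_eq Tu.
case E: X => [|u s] /=.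
- apply/esym/negP => /existsP[u Hu].
  have : u \in X by rewrite /X mem_filter Hu mem_enum.
  by rewrite E.
- have : u \in X by rewrite E mem_head.
  rewrite mem_filter => /andP[Hu _].
  have -> : [exists u, adj v u && trans t u] by apply/existsP; exists u.
  by case: s E.
Qed.

Lemma F_uniq t v u0 : actv (H t) v = Listen ->
  (forall u, adj v u && trans t u = (u == u0)) -> F t v = Recv (m u0).
Proof.
move=> A U; rewrite /F /slot_feedback A.
rewrite (eq_filter (a2 := pred1 u0)); last first.
  by move=> u /=; rewrite tx_eq -U; case: trans; rewrite ?andbT ?andbF.
rewrite filter_pred1_uniq ?enum_uniq ?mem_enum //= tx_eq.
have := U u0; rewrite eqxx => /andP[_ ->] //.
Qed.

Lemma energy_bound v : energy P adj id S R m v <= (2 * L).+1.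
Proof.
rewrite /energy [rounds _]/=.
case vS: (v \in S).
- have Ea : forall t, is_active (actv (H t) v) = sendc L t (keyu v).
    by move=> t; rewrite /action_of /sinput vS /= size_hist; case: sendc.
  under eq_bigr do rewrite Ea.
  apply: (@leq_trans (\sum_(t < 2^L.+1) \sum_(j < L.+1) (t == (2^L + keyu v) %/ 2^j :> nat))).
    apply: leq_sum => t _; rewrite /sendc; exact: (has_iota_sum (fun j => nat_of_ord t == (2^L + keyu v) %/ 2^j)).
  rewrite exchange_big /=.
  apply: (@leq_trans (\sum_(j < L.+1) 1)).
    by apply: leq_sum => j _; apply: sum_eq1.
  rewrite sum1_card card_ord; lia.
case vR: (v \in R).
- have Ea : forall t, is_active (actv (H t) v) = has (fun d => t %/ 2 == nodeF d v) (iota 0 L).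
    by move=> t; rewrite (listen_iff _ (negbT vS) vR); case: has.
  under eq_bigr do rewrite Ea.
  apply: (@leq_trans (\sum_(t < 2^L.+1) \sum_(d < L) (t %/ 2 == nodeF d v))).
    by apply: leq_sum => t _; exact: (has_iota_sum (fun d => t %/ 2 == nodeF d v)).
  rewrite exchange_big /=.
  apply: (@leq_trans (\sum_(j < L) 2)).
    by apply: leq_sum => j _; apply: sum_half.
  rewrite sum_nat_const card_ord; lia.
- rewrite big1 // => t _.
  by rewrite /action_of /sinput vS vR.
Qed.


Lemma correct : 2 <= N -> 2 <= M -> valid_instance N M adj id S m -> SR_solved P adj id S R m.
Proof.
move=> hN hM [_ _ _ [idinj idr mr]].
have L1 : 0 < L by rewrite /Lv up_log_gt0; apply/andP; split => //; lia.
have Kb : minn M N <= 2^L := up_logP _ (isT : 1 < 2).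
have keyb : forall u, u \in S -> keyu u < 2^L.
  move=> u uS; have := mr u uS; have := idr u; rewrite /keyu /keyf.
  by case: (leqP M N) => hMN; lia.
move=> v vR [u1 Hu1].
case vS: (v \in S).
  exists v; first by rewrite inE /closed_nbhd inE eqxx vS.
  by rewrite /final_output /sinput vS.
move: Hu1; rewrite inE /closed_nbhd inE => /andP[/orP[/eqP E|adj1] u1S].
  by rewrite E vS in u1S.
pose isk k := [exists u, [&& adj v u, u \in S & keyu u == k]].
have ex : exists k, isk k.
  by exists (keyu u1); apply/existsP; exists u1; rewrite adj1 u1S eqxx.
case: (ex_minnP ex) => kmin Hk Hmin.
case/existsP: (Hk) => u0 /and3P[a0 s0 /eqP k0].
have kminb : kmin < 2^L by rewrite -k0 keyb.
set X := 2^L + kmin.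
have claim : forall d, d <= L -> nodeF d v = X %/ 2^(L-d).
  elim=> [|d IH] hd.
  - rewrite /nodeF /=; have := div_range kminb (leqnn L).
    rewrite subnn subn0 expn0 expn1 -/X; set y := X %/ _; lia.
  - have hd' : d <= L by lia.
    have IH' := IH hd'.
    set n := nodeF d v in IH'.
    have nr : 2^d <= n < 2^d.+1 by rewrite /n /nodeF; apply: node_range.
    rewrite /nodeF [node d.+1 _]/=.
    rewrite node_mk; last by rewrite !(expnS 2 d.+1); lia.
    rewrite -/n nth_mkseq; last by move: nr; rewrite !expnS; lia.
    have Lis : actv (H (2 * n)) v = Listen.
      rewrite listen_iff ?vS ?vR //.
      have -> // : has (fun d0 => 2 * n %/ 2 == nodeF d0 v) (iota 0 L).
      apply/hasP; exists d; first by rewrite mem_iota; lia.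
      by rewrite mulKn.
    rewrite F_sil //.
    have nr2 : 2^d.+1 <= 2 * n < 2^d.+2 by move: nr; rewrite !expnS; lia.
    set a := L - d.+1.
    have La : L - d = a.+1 by rewrite /a; lia.
    rewrite La expnSr divnMA in IH'.
    set y := X %/ 2^a in IH'.
    have hsc : forall u, u \in S -> trans (2 * n) u = (2 * n == (2^L + keyu u) %/ 2^a).
      by move=> u uS; rewrite /trans uS /= (sendc_iff (keyb u uS) hd nr2).
    case: existsP => [[u /andP[au tu]] | nE] /=.
    + have uS : u \in S by move: tu; rewrite /trans => /andP[].
      rewrite hsc // in tu; move/eqP: tu => sc.
      have hk : kmin <= keyu u by apply: Hmin; apply/existsP; exists u; rewrite au uS eqxx.
      have : y <= (2^L + keyu u) %/ 2^a by apply: leq_div2r; rewrite /X leq_add2l.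
      rewrite -sc => hy. exact: (ar1 hy IH').
    + have : y != 2 * n.
        apply/eqP => yE; apply: nE; exists u0; rewrite a0 /=.
        by rewrite hsc // k0 -/X -/y yE.
      move=> hy; exact: (ar2 hy IH').
have fin : node L (H (2^L.+1) v) = X by rewrite node_hist // claim // subnn expn0 divn1.
rewrite /final_output /sinput vS /= fin.
have u0N : u0 \in closed_nbhd adj v :&: S by rewrite inE /closed_nbhd inE a0 orbT s0.
case: leqP => hMN.
- exists u0 => //.
  move: k0; rewrite /keyu /keyf hMN; have := mr u0 s0; rewrite /X; lia.
- exists u0 => //.
  have XR : 2^L <= X < 2^L.+1 by rewrite /X expnS; lia.
  rewrite hist_mk nth_mkseq; last by case/andP: XR.
  have Lis : actv (H X) v = Listen.
    rewrite listen_iff ?vS ?vR //.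
    have -> // : has (fun d0 => X %/ 2 == nodeF d0 v) (iota 0 L).
    apply/hasP; exists L.-1; first by rewrite mem_iota; lia.
    rewrite claim; last by lia.
    by have -> : L - L.-1 = 1 by lia.
  rewrite (@F_uniq _ _ u0 Lis) //.
  move=> u; apply/andP/eqP.
  + case=> au /andP[uS sc].
    rewrite (sendc_iff (keyb u uS) (leqnn L) XR) subnn expn0 divn1 /X in sc.
    move: sc k0; rewrite /keyu /keyf leqNgt hMN /= => /eqP sc k0.
    move/addnI: sc => sc; apply: idinj; apply: (ar3 _ _ sc k0); [by case/andP: (idr u) | by case/andP: (idr u0)].
  + move=> ->; rewrite a0 /trans s0 /= (sendc_iff (keyb u0 s0) (leqnn L) XR).
    by rewrite subnn expn0 divn1 /X k0.
Qed.

End Exec.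

Lemma Lv_min N M : Lv N M = minn (up_log 2 M) (up_log 2 N).
Proof.
rewrite /Lv; case: (leqP M N) => h.
- have h2 := leq_up_log 2 h.
  have E1 : minn M N = M by apply/minn_idPl.
  have E2 : minn (up_log 2 M) (up_log 2 N) = up_log 2 M by apply/minn_idPl.
  by rewrite ?E1 E2.
- have h' := ltnW h; have h2 := leq_up_log 2 h'.
  have E1 : minn M N = N by apply/minn_idPr.
  have E2 : minn (up_log 2 M) (up_log 2 N) = up_log 2 N by apply/minn_idPr.
  by rewrite ?E1 E2.
Qed.

Theorem lemma14 :
  exists c : nat, forall N M : nat, 2 <= N -> 2 <= M ->
    exists P : protocol,
      rounds P <= c * minn M N /\
      forall (V : finType) (adj : rel V) (id : V -> nat) (S R : {set V}) (m : V -> nat),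
        valid_instance N M adj id S m ->
        (forall v, energy P adj id S R m v <= c * minn (up_log 2 M) (up_log 2 N)) /\
        SR_solved P adj id S R m.
Proof.
exists 4 => N M hN hM.
have hK : 1 < minn M N by lia.
have L1 : 0 < Lv N M by rewrite /Lv up_log_gt0 hK.
exists (theP N M); split.
- rewrite [rounds _]/=.
  have := up_log_gtn (isT : 1 < 2) hK; rewrite -/(Lv N M).
  have -> : (Lv N M).+1 = (Lv N M).-1.+2 by lia.
  rewrite !expnS; lia.
- move=> V adj id S R m Hv; split; last exact: correct.
  move=> v; have := energy_bound N M adj id S R m v.
  rewrite -Lv_min; move: (energy _ _ _ _ _ _ v) (Lv N M) L1 => e l h1 h2.
  clear -h1 h2; lia.
Qed.
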